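(* Let $(X,\mathcal B)$ be any $(K_4-e)$-design of order $11$, and let $D=\{\{x,y\}:\ [x,y,z-u]\in\mathcal B\}$ and $N=\{\{z,u\}:\ [x,y,z-u]\in\mathcal B\}$. Then $D\cap N=\emptyset$.
   Context: $K_4-e$ is the graph on four vertices $a,b,c,d$ with edges $ab,ac,ad,bc,bd$; it is denoted $[a,b,c-d]$ (so in $[x,y,z-u]$ the vertices $x,y$ have degree $3$, $z,u$ have degree $2$, and $zu$ is the missing edge). A $(K_4-e)$-design of order $v$ is a pair $(X,\mathcal B)$ where $X$ is a set of $v$ vertices and $\mathcal B$ is a collection of copies of $K_4-e$ (called blocks) with vertices in $X$ whose edge sets partition the edge set of the complete graph $K_v$ on $X$. *)

(* Defs.v *)
From mathcomp Require Import all_boot.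
Set Implicit Arguments. Unset Strict Implicit. Unset Printing Implicit Defensive.

(* A copy of K_4 - e, written [a,b,c-d]: vertices a b c d (pairwise distinct),
   edges ab, ac, ad, bc, bd; the missing edge is cd.  Represented by the
   quadruple (a, b, c, d). *)
Definition k4e (T : Type) := (T * T * T * T)%type.

Section K4e.
Variable T : finType.

Definition kA (B : k4e T) : T := B.1.1.1.
Definition kB (B : k4e T) : T := B.1.1.2.
Definition kC (B : k4e T) : T := B.1.2.
Definition kD (B : k4e T) : T := B.2.

Definition k4e_ok (B : k4e T) : bool :=
  uniq [:: kA B; kB B; kC B; kD B].

Definition same_upair (p q : T * T) : bool :=
  ((p.1 == q.1) && (p.2 == q.2)) || ((p.1 == q.2) && (p.2 == q.1)).

Definition k4e_edges (B : k4e T) : seq (T * T) :=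
  [:: (kA B, kB B); (kA B, kC B); (kA B, kD B); (kB B, kC B); (kB B, kD B)].

Definition k4e_covers (B : k4e T) (x y : T) : nat :=
  count (same_upair (x, y)) (k4e_edges B).

Definition k4e_design (blocks : seq (k4e T)) : Prop :=
  (forall B, B \in blocks -> k4e_ok B) /\
  (forall x y : T, x != y -> sumn [seq k4e_covers B x y | B <- blocks] = 1).

Definition dpair (B : k4e T) : T * T := (kA B, kB B).
Definition npair (B : k4e T) : T * T := (kC B, kD B).
End K4e.

(* Main.v *)
Require Import Defs.
From Stdlib Require Import NArith Classical.
From mathcomp Require Import all_boot.
Set Implicit Arguments. Unset Strict Implicit. Unset Printing Implicit Defensive.

Definition quad := (nat * nat * nat * nat)%type.
Definition edgesn (q : quad) : seq (nat * nat) :=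
  let: (a, b, c, d) := q in [:: (a, b); (a, c); (a, d); (b, c); (b, d)].
Definition inB (q : quad) (i j : nat) : bool :=
  has (fun e => ((i == e.1) && (j == e.2)) || ((i == e.2) && (j == e.1))) (edgesn q).

Definition bitN (j : nat) : N := N.pow 2 (N.of_nat j).
Definition uncov (s : seq N) (i j : nat) : bool :=
  (i < 11) && N.testbit (nth N0 s i) (N.of_nat j).
Definition rmask (q : quad) (i : nat) : N :=
  foldr N.lor N0 [seq N.lor (if i == e.1 then bitN e.2 else N0)
                              (if i == e.2 then bitN e.1 else N0) | e <- edgesn q].
Definition update (s : seq N) (q : quad) : seq N :=
  [seq N.ldiff (nth N0 s i) (rmask q i) | i <- iota 0 11].
Definition full : seq N :=
  [seq foldr N.lor N0 [seq (if j != i then bitN j else N0) | j <- iota 0 11] | i <- iota 0 11].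
Definition bits11 : seq (nat * N) :=
  [:: (0, 0%num); (1, 1%num); (2, 2%num); (3, 3%num); (4, 4%num); (5, 5%num);
      (6, 6%num); (7, 7%num); (8, 8%num); (9, 9%num); (10, 10%num)].
Definition elems (m : N) : seq nat := [seq p.1 | p <- bits11 & N.testbit m p.2].

Definition cands (s : seq N) (v u : nat) : seq quad :=
  let W := elems (N.land (nth N0 s v) (nth N0 s u)) in
  flatten [seq [seq (v, u, c, d) | d <- W & c < d] | c <- W] ++
  flatten [seq [seq (v, w, u, t) | t <- elems (N.land (nth N0 s v) (nth N0 s w)) & t != u] | w <- W] ++
  flatten [seq [seq (u, w, v, t) | t <- elems (N.land (nth N0 s u) (nth N0 s w)) & t != v] | w <- W].

Definition pick (s : seq N) : option (nat * nat) :=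
  let best := foldl (fun (acc : nat * nat) v =>
      let c := size (elems (nth N0 s v)) in
      if (0 < c) && (c < acc.1) then (c, v) else acc) (99, 0) (iota 0 11) in
  if best.1 == 99 then None else
  let v := best.2 in
  match elems (nth N0 s v) with u :: _ => Some (v, u) | [::] => None end.

Fixpoint search (fuel : nat) (s : seq N) : bool :=
  match fuel with
  | 0 => true
  | f.+1 =>
    match pick s with
    | None => true
    | Some (v, u) =>
      if (v < 11) && (u < 11) && (v != u) && uncov s v u then
        has (fun q => search f (update s q)) (cands s v u)
      else true
    end
  end.

Definition init (b1 b2 : quad) := update (update full b1) b2.

Lemma Neqb_nat (j k : nat) : N.eqb (N.of_nat j) (N.of_nat k) = (j == k).
Proof.
apply/idP/eqP => [/N.eqb_eq/Nat2N.inj_iff //| ->]; exact/N.eqb_eq.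
Qed.

Lemma testbit_bitN j k : N.testbit (bitN j) (N.of_nat k) = (j == k).
Proof. by rewrite /bitN N.pow2_bits_eqb Neqb_nat. Qed.

Lemma testbit_foldr (l : seq N) n :
  N.testbit (foldr N.lor N0 l) n = has (fun m => N.testbit m n) l.
Proof. elim: l => [|m l IH] /=; first exact: N.bits_0. by rewrite N.lor_spec IH. Qed.

Lemma testbit_if (b : bool) m n : N.testbit (if b then m else N0) n = b && N.testbit m n.
Proof. by case: b => //=; rewrite N.bits_0. Qed.

Lemma rmaskE q i j : N.testbit (rmask q i) (N.of_nat j) = inB q i j.
Proof.
rewrite /rmask testbit_foldr has_map /inB; apply: eq_has => e /=.
by rewrite N.lor_spec !testbit_if !testbit_bitN [e.2 == j]eq_sym [e.1 == j]eq_sym.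
Qed.

Lemma uncov_update s q i j : uncov (update s q) i j = uncov s i j && ~~ inB q i j.
Proof.
rewrite /uncov /update; case: ltnP => Hi //.
rewrite (nth_map 0) ?size_iota // nth_iota // add0n N.ldiff_spec rmaskE //.
Qed.

Lemma uncov_full i j : uncov full i j = [&& i < 11, j < 11 & i != j].
Proof.
rewrite /uncov /full; case: ltnP => Hi //.
rewrite (nth_map 0) ?size_iota // nth_iota // add0n testbit_foldr has_map.
rewrite (eq_has (a2 := fun k => (k != i) && (k == j))); last first.
  by move=> k /=; rewrite testbit_if testbit_bitN.
apply/hasP/idP => [[k Hk /andP[Hki /eqP Hkj]] | /andP[_ /andP[Hj Hij]]].
  subst k; move: Hk; rewrite mem_iota add0n => /andP[_ Hk]; by rewrite /= eq_sym Hk Hki.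
exists j; first by rewrite mem_iota add0n leq0n Hj.
by rewrite eqxx eq_sym Hij.
Qed.

Lemma bits11E : bits11 = [seq (j, N.of_nat j) | j <- iota 0 11].
Proof. by []. Qed.

Lemma mem_elems m j : (j \in elems m) = (j < 11) && N.testbit m (N.of_nat j).
Proof.
rewrite /elems bits11E filter_map -map_comp.
rewrite (eq_map (g := id)) // map_id mem_filter mem_iota add0n andbC leq0n.
by []. Qed.

Lemma inB_sym q i j : inB q i j = inB q j i.
Proof. by rewrite /inB; apply: eq_has => e; case: (i == e.1); case: (i == e.2); case: (j == e.1); case: (j == e.2). Qed.

Lemma inB_swapab a b c d i j : inB (b, a, c, d) i j = inB (a, b, c, d) i j.
Proof.
rewrite /inB /= !orbF.
case: (i == a); case: (i == b); case: (i == c); case: (i == d);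
case: (j == a); case: (j == b); case: (j == c); case: (j == d) => //.
Qed.

Lemma inB_swapcd a b c d i j : inB (a, b, d, c) i j = inB (a, b, c, d) i j.
Proof.
rewrite /inB /= !orbF.
case: (i == a); case: (i == b); case: (i == c); case: (i == d);
case: (j == a); case: (j == b); case: (j == c); case: (j == d) => //.
Qed.

Definition valid (q : quad) : bool :=
  let: (a, b, c, d) := q in [&& a < 11, b < 11, c < 11, d < 11 & uniq [:: a; b; c; d]].

Lemma inB_range q p r : valid q -> inB q p r -> [&& p < 11, r < 11 & p != r].
Proof.
case: q => [[[a b] c] d] /= /and5P[Ha Hb Hc Hd].
rewrite !inE !negb_or => /and4P[/and3P[Hab Hac Had] /andP[Hbc Hbd] Hcd _].
rewrite /inB /= !orbF.
move=> H; repeat (case/orP: H => H); case/andP: H => /eqP -> /eqP ->;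
  rewrite ?Ha ?Hb ?Hc ?Hd ?Hab ?Hac ?Had ?Hbc ?Hbd //= eq_sym ?Hab ?Hac ?Had ?Hbc ?Hbd. all: done.
Qed.

Lemma memW s v u x : x < 11 -> uncov s v x -> uncov s u x ->
  x \in elems (N.land (nth N0 s v) (nth N0 s u)).
Proof.
move=> Hx /andP[_ H1] /andP[_ H2]; by rewrite mem_elems Hx N.land_spec H1 H2.
Qed.

Lemma memT1 s v u c d : c < d -> c < 11 -> d < 11 -> uncov s v c -> uncov s u c ->
  uncov s v d -> uncov s u d -> (v, u, c, d) \in cands s v u.
Proof.
move=> Hcd Hc Hd H1 H2 H3 H4; rewrite /cands !mem_cat; apply/orP; left.
apply/flatten_mapP; exists c; first exact: memW.
by apply/mapP; exists d; rewrite // mem_filter Hcd memW.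
Qed.

Lemma memT2 s v u w t : w < 11 -> t < 11 -> t != u -> uncov s v w -> uncov s u w ->
  uncov s v t -> uncov s w t -> (v, w, u, t) \in cands s v u.
Proof.
move=> Hw Ht Htu H1 H2 H3 H4; rewrite /cands !mem_cat; apply/orP; right; apply/orP; left.
apply/flatten_mapP; exists w; first exact: memW.
by apply/mapP; exists t; rewrite // mem_filter Htu memW.
Qed.

Lemma memT3 s v u w t : w < 11 -> t < 11 -> t != v -> uncov s v w -> uncov s u w ->
  uncov s u t -> uncov s w t -> (u, w, v, t) \in cands s v u.
Proof.
move=> Hw Ht Htu H1 H2 H3 H4; rewrite /cands !mem_cat; apply/orP; right; apply/orP; right.
apply/flatten_mapP; exists w; first exact: memW.
by apply/mapP; exists t; rewrite // mem_filter Htu memW.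
Qed.

Lemma cands_complete s B v u : valid B -> inB B v u ->
  (forall p r, inB B p r -> uncov s p r) ->
  exists2 q, q \in cands s v u & (forall i j, inB q i j = inB B i j).
Proof.
case: B => [[[a b] c] d] Hv Hin H.
move: (Hv) => /= /and5P[Ha Hb Hc Hd].
rewrite !inE !negb_or => /and4P[/and3P[Hab Hac Had] /andP[Hbc Hbd] Hcd _].
have U : forall p r, inB (a, b, c, d) p r -> uncov s p r by [].
have Uab : uncov s a b by apply: H; rewrite /inB /= !eqxx.
have Uba : uncov s b a by apply: H; rewrite /inB /= !eqxx !orbT.
have Uac : uncov s a c by apply: H; rewrite /inB /= !eqxx !orbT.
have Uca : uncov s c a by apply: H; rewrite /inB /= !eqxx !orbT.
have Uad : uncov s a d by apply: H; rewrite /inB /= !eqxx !orbT.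
have Uda : uncov s d a by apply: H; rewrite /inB /= !eqxx !orbT.
have Ubc : uncov s b c by apply: H; rewrite /inB /= !eqxx !orbT.
have Ucb : uncov s c b by apply: H; rewrite /inB /= !eqxx !orbT.
have Ubd : uncov s b d by apply: H; rewrite /inB /= !eqxx !orbT.
have Udb : uncov s d b by apply: H; rewrite /inB /= !eqxx !orbT.
rewrite /inB /= !orbF in Hin.
have Hdc : d != c by rewrite eq_sym.
have Hca : c != a by rewrite eq_sym.
have Hda : d != a by rewrite eq_sym.
have Hcb : c != b by rewrite eq_sym.
have Hdb : d != b by rewrite eq_sym.
repeat (case/orP: Hin => Hin); case/andP: Hin => /eqP -> /eqP ->.
- case: (ltngtP c d) => [lt|gt|eq]; last by rewrite eq in Hcd; rewrite eqxx in Hcd.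
  + by exists (a, b, c, d) => //; apply: memT1.
  + by exists (a, b, d, c); [apply: memT1 | move=> i j; rewrite inB_swapcd].
- case: (ltngtP c d) => [lt|gt|eq]; last by rewrite eq in Hcd; rewrite eqxx in Hcd.
  + by exists (b, a, c, d); [apply: memT1 | move=> i j; rewrite inB_swapab].
  + exists (b, a, d, c); first by apply: memT1.
    by move=> i j; rewrite inB_swapcd inB_swapab.
- by exists (a, b, c, d) => //; apply: memT2.
- by exists (a, b, c, d) => //; apply: memT3.
- by exists (a, b, d, c); [apply: memT2 | move=> i j; rewrite inB_swapcd].
- by exists (a, b, d, c); [apply: memT3 | move=> i j; rewrite inB_swapcd].
- by exists (b, a, c, d); [apply: memT2 | move=> i j; rewrite inB_swapab].
- by exists (b, a, c, d); [apply: memT3 | move=> i j; rewrite inB_swapab].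
- exists (b, a, d, c); first by apply: memT2.
  by move=> i j; rewrite inB_swapcd inB_swapab.
- exists (b, a, d, c); first by apply: memT3.
  by move=> i j; rewrite inB_swapcd inB_swapab.
Qed.

Section Sound.
Variable D : seq quad.
Hypothesis Hval : forall q, q \in D -> valid q.
Hypothesis Hcov : forall v u, v < 11 -> u < 11 -> v != u -> exists2 q, q \in D & inB q v u.
Hypothesis Huniq : forall q q', q \in D -> q' \in D ->
  forall p r, inB q p r -> inB q' p r -> q = q'.

Definition Inv (s : seq N) : Prop :=
  (forall i j, uncov s i j = uncov s j i) /\
  (forall B, B \in D -> (forall p r, inB B p r -> uncov s p r) \/
                        (forall p r, inB B p r -> ~~ uncov s p r)).

Lemma Inv_update s B0 q : Inv s -> B0 \in D -> (forall i j, inB q i j = inB B0 i j) ->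
  Inv (update s q).
Proof.
move=> [Hsym Hall] HB0 Hq; split.
  by move=> i j; rewrite !uncov_update Hsym inB_sym.
move=> B HB.
case: (classic (exists p r, inB B p r /\ inB B0 p r)) => [[p [r [H1 H2]]] | Hno].
  by right => p' r' Hin; rewrite uncov_update Hq -(Huniq HB HB0 H1 H2) Hin andbF.
have Hdis : forall p r, inB B p r -> inB B0 p r = false.
  move=> p r Hin; apply/negP => H2; apply: Hno; by exists p, r.
case: (Hall B HB) => H; [left | right] => p r Hin;
  rewrite uncov_update Hq Hdis // andbT; exact: H.
Qed.

Lemma search_sound n s : Inv s -> search n s.
Proof.
elim: n s => [|n IH] s Hs //=.
case: (pick s) => [[v u]|] //.
case: ifP => // /andP[/andP[/andP[Hv Hu] Hvu] Hunc].
have [B0 HB0 Hin] := Hcov Hv Hu Hvu.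
have HU : forall p r, inB B0 p r -> uncov s p r.
  case: Hs => _ Hall; case: (Hall B0 HB0) => // H; by move: (H _ _ Hin); rewrite Hunc.
have [q Hq Heq] := cands_complete (Hval HB0) Hin HU.
apply/hasP; exists q => //; apply: IH; exact: Inv_update Hs HB0 Heq.
Qed.

Lemma Inv_full : Inv full.
Proof.
split.
  by move=> i j; rewrite !uncov_full eq_sym; case: (i < 11); case: (j < 11).
move=> B HB; left => p r Hin; rewrite uncov_full; exact: inB_range (Hval HB) Hin.
Qed.

Lemma no_design b1 b2 : b1 \in D -> b2 \in D -> search 12 (init b1 b2) = false -> False.
Proof.
move=> H1 H2 Hs; suff : search 12 (init b1 b2) by rewrite Hs.
apply: search_sound; rewrite /init.
apply: (Inv_update (B0 := b2)) => //; exact: (Inv_update (B0 := b1)) Inv_full H1 _.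
Qed.
End Sound.

Section TL.
Variable T : finType.

Definition mapq (f : T -> nat) (B : k4e T) : quad := (f (kA B), f (kB B), f (kC B), f (kD B)).

Lemma inB_mapq f (finj : injective f) B t t' :
  inB (mapq f B) (f t) (f t') = (0 < k4e_covers B t t').
Proof.
rewrite /k4e_covers -has_count /inB.
have -> : edgesn (mapq f B) = [seq (f e.1, f e.2) | e <- k4e_edges B] by [].
rewrite has_map; apply: eq_has => e /=; by rewrite /same_upair /= !(inj_eq finj).
Qed.

Lemma sumn_ge (X : eqType) (s : seq X) (f : X -> nat) z : z \in s -> f z <= sumn (map f s).
Proof.
elim: s => [|w s IH] //=; rewrite inE => /orP[/eqP -> | H]; first exact: leq_addr.
exact: leq_trans (IH H) (leq_addl _ _).
Qed.

Lemma sumn_two (X : eqType) (s : seq X) (f : X -> nat) z w : z \in s -> w \in s -> z != w ->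
  f z + f w <= sumn (map f s).
Proof.
elim: s => [|h s IH] //=; rewrite !inE => Hz Hw Hzw.
case/orP: Hz => [/eqP Ez | Hz]; case/orP: Hw => [/eqP Ew | Hw].
- by rewrite Ez Ew eqxx in Hzw.
- by rewrite Ez leq_add2l; apply: sumn_ge.
- by rewrite Ew addnC leq_add2l; apply: sumn_ge.
- exact: leq_trans (IH Hz Hw Hzw) (leq_addl _ _).
Qed.

Lemma covers_diag (B : k4e T) t : k4e_ok B -> k4e_covers B t t = 0.
Proof.
move=> Hok; apply/eqP; rewrite -leqn0 leqNgt /k4e_covers -has_count; apply/hasP => [[e He Hs]].
have Ee : e.1 = e.2 by move: Hs; rewrite /same_upair /=; case/orP => /andP[/eqP <- /eqP <-].
move: Hok He; case: B => [[[a b] c] d]; rewrite /k4e_ok /k4e_edges /kA /kB /kC /kD /=.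
rewrite !inE !negb_or => /and4P[/and3P[Hab Hac Had] /andP[Hbc Hbd] Hcd _] He.
by repeat (case/orP: He => He); move/eqP: He => He; rewrite He /= in Ee;
  rewrite Ee eqxx in Hab Hac Had Hbc Hbd.
Qed.

Variable blocks : seq (k4e T).
Hypothesis Hdes : k4e_design blocks.

Lemma blocks_uniq B B' t t' : B \in blocks -> B' \in blocks ->
  0 < k4e_covers B t t' -> 0 < k4e_covers B' t t' -> B = B'.
Proof.
move=> HB HB' H1 H2; case: (eqVneq B B') => // Hne.
have Htt : t != t'.
  by apply/eqP => E; move: H1; rewrite E covers_diag //; apply: Hdes.1.
have := sumn_two (fun X => k4e_covers X t t') HB HB' Hne.
rewrite Hdes.2 //; move: H1 H2; case: (k4e_covers B t t') => // n; case: (k4e_covers B' t t') => // m _ _; rewrite addSn addnS ltnS ltn0.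
by []. Qed.

Lemma covers_pos (B : k4e T) t t' e : e \in k4e_edges B -> same_upair (t, t') e -> 0 < k4e_covers B t t'.
Proof. by move=> He Hs; rewrite /k4e_covers -has_count; apply/hasP; exists e. Qed.


Lemma sumn_pos (X : eqType) (s : seq X) (f : X -> nat) :
  0 < sumn (map f s) -> exists2 z, z \in s & 0 < f z.
Proof.
elim: s => //= w s IH; case: (posnP (f w)) => [Hw | Hw _].
  by rewrite Hw add0n => /IH [z Hz Hf]; exists z; rewrite ?inE ?Hz ?orbT.
by exists w; rewrite ?inE ?eqxx.
Qed.

Lemma main_T (x y c d a b c2 d2 : T) :
  #|T| = 11 -> (x, y, c, d) \in blocks -> (a, b, c2, d2) \in blocks ->
  ((c2 == x) && (d2 == y)) || ((c2 == y) && (d2 == x)) ->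
  (forall D : seq quad, (forall q, q \in D -> valid q) ->
     (forall v u, v < 11 -> u < 11 -> v != u -> exists2 q, q \in D & inB q v u) ->
     (forall q q', q \in D -> q' \in D -> forall p r, inB q p r -> inB q' p r -> q = q') ->
     (0, 1, 2, 3) \in D -> ((4, 5, 0, 1) \in D \/ (4, 5, 1, 0) \in D) -> False) ->
  False.
Proof.
move=> Hcard H1 H2 P Final.
have ok1 := Hdes.1 _ H1; have ok2 := Hdes.1 _ H2.
move: ok1 ok2; rewrite /k4e_ok /kA /kB /kC /kD /= !inE !negb_or.
move=> /and4P[/and3P[Hxy Hxc Hxd] /andP[Hyc Hyd] Hcd _].
move=> /and4P[/and3P[Hab Hac2 Had2] /andP[Hbc2 Hbd2] Hc2d2 _].
have [Hax Hay Hbx Hby] : [/\ a != x, a != y, b != x & b != y].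
  by case/orP: P => /andP[/eqP E1 /eqP E2]; rewrite -E1 -E2; split; rewrite // eq_sym.
have Hx2 : (x == c2) || (x == d2) by case/orP: P => /andP[/eqP -> /eqP ->]; rewrite eqxx ?orbT.
have cross : forall u, (u == c) || (u == d) -> (u == a) || (u == b) -> False.
  move=> u Hu1 Hu2.
  have C1 : 0 < k4e_covers (x, y, c, d) u x.
    case/orP: Hu1 => /eqP ->.
    - by apply: (covers_pos (e := (x, c))); rewrite /same_upair /= ?inE ?eqxx ?orbT.
    - by apply: (covers_pos (e := (x, d))); rewrite /same_upair /= ?inE ?eqxx ?orbT.
  have C2 : 0 < k4e_covers (a, b, c2, d2) u x.
    case/orP: Hu2 => /eqP ->; case/orP: Hx2 => /eqP ->.
    - by apply: (covers_pos (e := (a, c2))); rewrite /same_upair /= ?inE ?eqxx ?orbT.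
    - by apply: (covers_pos (e := (a, d2))); rewrite /same_upair /= ?inE ?eqxx ?orbT.
    - by apply: (covers_pos (e := (b, c2))); rewrite /same_upair /= ?inE ?eqxx ?orbT.
    - by apply: (covers_pos (e := (b, d2))); rewrite /same_upair /= ?inE ?eqxx ?orbT.
  have E := blocks_uniq H1 H2 C1 C2.
  by case: E => Ex _ _ _; rewrite Ex eqxx in Hax.
have Hac : a != c by apply/eqP => E; apply: (cross a); rewrite ?E eqxx ?orbT.
have Had : a != d by apply/eqP => E; apply: (cross a); rewrite ?E eqxx ?orbT.
have Hbc : b != c by apply/eqP => E; apply: (cross b); rewrite ?E eqxx ?orbT.
have Hbd : b != d by apply/eqP => E; apply: (cross b); rewrite ?E eqxx ?orbT.
pose S6 := [:: x; y; c; d; a; b].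
pose L := S6 ++ [seq t <- enum T | t \notin S6].
have HLu : uniq L.
  rewrite cat_uniq filter_uniq ?enum_uniq // andbT.
  apply/andP; split.
    rewrite /S6 /= !inE !negb_or Hxy Hxc Hxd Hyc Hyd Hcd Hab.
    by rewrite (eq_sym x a) (eq_sym x b) (eq_sym y a) (eq_sym y b) (eq_sym c a) (eq_sym c b) (eq_sym d a) (eq_sym d b) Hax Hay Hac Had Hbx Hby Hbc Hbd.
  by apply/hasPn => t; rewrite mem_filter => /andP[].
have HLall : forall t, t \in L.
  move=> t; rewrite mem_cat mem_filter mem_enum andbT; by case: (t \in S6).
have HLs : size L = 11.
  rewrite -Hcard cardE; apply: perm_size; apply: uniq_perm => //; first exact: enum_uniq.
  by move=> t; rewrite HLall mem_enum.
pose sg := fun t => index t L.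
have sg_inj : injective sg.
  move=> t t' E; rewrite -(nth_index x (HLall t)) -(nth_index x (HLall t')); exact: (congr1 (nth x L) E).
have sg_lt : forall t, sg t < 11 by move=> t; rewrite -HLs index_mem.
have sg_nth : forall k, k < 11 -> sg (nth x L k) = k.
  by move=> k Hk; rewrite /sg index_uniq // HLs.
pose D := [seq mapq sg B | B <- blocks].
have Hval : forall q, q \in D -> valid q.
  move=> q /mapP[B HB ->]; have := Hdes.1 _ HB.
  case: B HB => [[[a' b'] c'] d'] HB Hu.
  have -> : valid (mapq sg (a', b', c', d')) =
     [&& true, true, true, true & uniq (map sg [:: a'; b'; c'; d'])] by rewrite /valid /= !sg_lt.
  by rewrite map_inj_uniq.
have Sx : sg x = 0 := sg_nth 0 isT.
have Sy : sg y = 1 := sg_nth 1 isT.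
have Sc : sg c = 2 := sg_nth 2 isT.
have Sd : sg d = 3 := sg_nth 3 isT.
have Sa : sg a = 4 := sg_nth 4 isT.
have Sb : sg b = 5 := sg_nth 5 isT.
apply: (Final D) => //.
- move=> v u Hv Hu Hvu.
  have Hne : nth x L v != nth x L u.
    by apply: contra Hvu => /eqP E; rewrite -(sg_nth _ Hv) -(sg_nth _ Hu) E.
  have Hs : sumn [seq k4e_covers B (nth x L v) (nth x L u) | B <- blocks] = 1 by apply: Hdes.2.
  have [B HB HBpos] : exists2 B, B \in blocks & 0 < k4e_covers B (nth x L v) (nth x L u).
    by apply: (sumn_pos (f := fun B => k4e_covers B (nth x L v) (nth x L u))); rewrite Hs.
  exists (mapq sg B); first exact: map_f.
  by rewrite -(sg_nth _ Hv) -(sg_nth _ Hu) inB_mapq.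
- move=> q q' Hq Hq' p r Hp Hp'.
  have /and3P[Hp11 Hr11 _] := inB_range (Hval _ Hq) Hp.
  move: Hq Hq' => /mapP[B HB Eq] /mapP[B' HB' Eq']; subst q q'.
  rewrite -(sg_nth _ Hp11) -(sg_nth _ Hr11) !inB_mapq // in Hp Hp'.
  by rewrite (blocks_uniq HB HB' Hp Hp').
- have -> : (0, 1, 2, 3) = mapq sg (x, y, c, d) by rewrite /mapq /= Sx Sy Sc Sd.
  exact: map_f.
- case/orP: P => /andP[/eqP E1 /eqP E2]; subst c2 d2; [left | right].
  + have -> : (4, 5, 0, 1) = mapq sg (a, b, x, y) by rewrite /mapq /= Sx Sy Sa Sb.
    exact: map_f.
  + have -> : (4, 5, 1, 0) = mapq sg (a, b, y, x) by rewrite /mapq /= Sx Sy Sa Sb.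
    exact: map_f.
Qed.
End TL.

Lemma search_false : search 12 (init (0, 1, 2, 3) (4, 5, 0, 1)) = false.
Proof. vm_cast_no_check (erefl false). Qed.

Lemma init_swap : init (0, 1, 2, 3) (4, 5, 1, 0) = init (0, 1, 2, 3) (4, 5, 0, 1).
Proof. vm_compute. reflexivity. Qed.

Lemma final_nat (D : seq quad) : (forall q, q \in D -> valid q) ->
     (forall v u, v < 11 -> u < 11 -> v != u -> exists2 q, q \in D & inB q v u) ->
     (forall q q', q \in D -> q' \in D -> forall p r, inB q p r -> inB q' p r -> q = q') ->
     (0, 1, 2, 3) \in D -> ((4, 5, 0, 1) \in D \/ (4, 5, 1, 0) \in D) -> False.
Proof.
move=> Hval Hcov Huniq H1 [] H2.
  exact: (no_design Hval Hcov Huniq H1 H2 search_false).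
by apply: (no_design Hval Hcov Huniq H1 H2); rewrite init_swap search_false.
Qed.

Theorem lemma3p2 (T : finType) (blocks : seq (k4e T)) :
  #|T| = 11 -> k4e_design blocks ->
  forall B1 B2, B1 \in blocks -> B2 \in blocks ->
    ~~ same_upair (dpair B1) (npair B2).
Proof.
move=> Hc Hd [[[x y] c] d] [[[a b] c2] d2] H1 H2; apply/negP => P.
apply: (main_T Hd Hc H1 H2 _ final_nat).
move: P; rewrite /same_upair /dpair /npair /kA /kB /kC /kD /=.
by case/orP => /andP[/eqP <- /eqP <-]; rewrite !eqxx ?orbT.
Qed.
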